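(* The logics $\mathsf{CTL}_\delta$ and $\mathsf{CTL}_\infty$ are equally expressive in the following sense: for every $\mathsf{CTL}_\infty$ formula $\varphi$ there is a $\mathsf{CTL}_\delta$ formula $\varphi'$ such that for every Kripke structure $K$ over $\mathbf{AP}$ and every state $s$ of $K$, $s\models\varphi$ in $K$ iff $s\models\varphi'$ in $D(K)$; and for every $\mathsf{CTL}_\delta$ formula $\varphi$ there is a $\mathsf{CTL}_\infty$ formula $\varphi'$ such that for every Kripke structure $K$ over $\mathbf{AP}$ and every state $s$ of $K$, $s\models\varphi$ in $D(K)$ iff $s\models\varphi'$ in $K$.
   Context: A Kripke structure is $K=(S,L,\to)$ with $L:S\to\mathcal{P}(\mathbf{AP})$ and $\to\subseteq S\times S$ (not necessarily total). Paths are finite sequences $s_0,\dots,s_n$ or infinite sequences $s_0,s_1,\dots$ with $s_k\to s_{k+1}$; a path is maximal if infinite or if its last state has no successor. The deadlock extension $D(K)$ adds a fresh state $s_\delta$ labelled $\{\delta\}$, where $\delta\notin\mathbf{AP}$ is a fresh atomic proposition, a transition $s_\delta\to s_\delta$, and a transition $u\to s_\delta$ from every state $u$ of $K$ without successors. $\mathsf{CTL}_\infty$ formulas: $\varphi::=p\mid\neg\varphi\mid\bigwedge\Phi'\mid\exists(\varphi\,\mathsf{U}\,\varphi)\mid\exists^\infty\mathsf{G}\varphi$ with $p\in\mathbf{AP}$, $\Phi'$ an arbitrary set. $\mathsf{CTL}_\delta$ formulas: $\varphi::=p\mid\neg\varphi\mid\bigwedge\Phi'\mid\exists(\varphi\,\mathsf{U}\,\varphi)\mid\exists\mathsf{G}\varphi$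 with $p\in\mathbf{AP}\cup\{\delta\}$. Semantics: $s\models p$ iff $p\in L(s)$; negation and conjunction as usual; $s\models\exists(\varphi\,\mathsf{U}\,\varphi')$ iff there is a finite path $s_0,\dots,s_k$ from $s$ with $s_k\models\varphi'$ and $s_i\models\varphi$ for all $i<k$; $s\models\exists\mathsf{G}\varphi$ iff some maximal path from $s$ has all its states satisfying $\varphi$; $s\models\exists^\infty\mathsf{G}\varphi$ iff some infinite path from $s$ has all its states satisfying $\varphi$. *)

(* Defs.v *)
From Stdlib Require Import Arith.

Set Implicit Arguments.

(* Kripke structure over atomic propositions AP with state type S;
   the transition relation need not be total. *)
Record kripke (AP S : Type) := Kripke {
  klab : S -> AP -> Prop;
  ktr  : S -> S -> Prop
}.

Arguments klab {AP S} _ _ _.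
Arguments ktr {AP S} _ _ _.

(* finite path s_0,...,s_k given by f (only f 0..k matter) *)
Definition fin_path {AP S} (K : kripke AP S) (f : nat -> S) (k : nat) : Prop :=
  forall i, i < k -> ktr K (f i) (f (Datatypes.S i)).

Definition inf_path {AP S} (K : kripke AP S) (f : nat -> S) : Prop :=
  forall i, ktr K (f i) (f (Datatypes.S i)).

Definition deadlock {AP S} (K : kripke AP S) (u : S) : Prop :=
  forall v, ~ ktr K u v.

(* CTL_infty: arbitrary (possibly infinite) conjunctions, represented by
   families indexed by an arbitrary type I. *)
Inductive ctl_inf (AP : Type) : Type :=
| IAtom : AP -> ctl_inf AP
| INeg  : ctl_inf AP -> ctl_inf AP
| IAnd  : forall I : Type, (I -> ctl_inf AP) -> ctl_inf AP
| IEU   : ctl_inf AP -> ctl_inf AP -> ctl_inf AP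
| IEinfG : ctl_inf AP -> ctl_inf AP.

(* CTL_delta: atoms from AP + {delta}; None encodes the fresh delta. *)
Inductive ctl_delta (AP : Type) : Type :=
| DAtom : option AP -> ctl_delta AP
| DNeg  : ctl_delta AP -> ctl_delta AP
| DAnd  : forall I : Type, (I -> ctl_delta AP) -> ctl_delta AP
| DEU   : ctl_delta AP -> ctl_delta AP -> ctl_delta AP
| DEG   : ctl_delta AP -> ctl_delta AP.

Fixpoint sat_inf {AP S} (K : kripke AP S) (s : S) (phi : ctl_inf AP) {struct phi} : Prop :=
  match phi with
  | IAtom p => klab K s p
  | INeg psi => ~ sat_inf K s psi
  | IAnd Phi => forall i, sat_inf K s (Phi i)
  | IEU psi1 psi2 =>
      exists (f : nat -> S) (k : nat), f 0 = s /\ fin_path K f k /\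
        sat_inf K (f k) psi2 /\ (forall i, i < k -> sat_inf K (f i) psi1)
  | IEinfG psi =>
      exists f : nat -> S, f 0 = s /\ inf_path K f /\ (forall i, sat_inf K (f i) psi)
  end.

(* K' is a Kripke structure over AP + {delta}. EG quantifies over maximal paths:
   infinite ones, or finite ones ending in a state without successor. *)
Fixpoint sat_delta {AP S} (K : kripke (option AP) S) (s : S) (phi : ctl_delta AP)
  {struct phi} : Prop :=
  match phi with
  | DAtom p => klab K s p
  | DNeg psi => ~ sat_delta K s psi
  | DAnd Phi => forall i, sat_delta K s (Phi i)
  | DEU psi1 psi2 =>
      exists (f : nat -> S) (k : nat), f 0 = s /\ fin_path K f k /\
        sat_delta K (f k) psi2 /\ (forall i, i < k -> sat_delta K (f i) psi1)
  | DEG psi =>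
      (exists f : nat -> S, f 0 = s /\ inf_path K f /\ (forall i, sat_delta K (f i) psi))
      \/
      (exists (f : nat -> S) (k : nat), f 0 = s /\ fin_path K f k /\ deadlock K (f k) /\
         (forall i, i <= k -> sat_delta K (f i) psi))
  end.

(* states: option S, None = s_delta; labels over option AP, None = delta. *)

Definition dext_lab {AP S} (K : kripke AP S) (s : option S) (p : option AP) : Prop :=
  match s, p with
  | Some u, Some a => klab K u a
  | Some _, None => False
  | None, Some _ => False
  | None, None => True
  end.

Definition dext_tr {AP S} (K : kripke AP S) (s t : option S) : Prop :=
  match s, t with
  | Some u, Some v => ktr K u v
  | Some u, None => deadlock K u
  | None, None => True
  | None, Some _ => False
  end.

Definition dext {AP S} (K : kripke AP S) : kripke (option AP) (option S) :=
  Kripke (dext_lab K) (dext_tr K).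

(* Main.v *)
Require Import Defs.
From Stdlib Require Import Arith Lia Classical ClassicalEpsilon.

Definition getd {St} (d : St) (o : option St) : St :=
  match o with Some x => x | None => d end.

Lemma getd_eq {St} (d : St) o : o <> None -> o = Some (getd d o).
Proof. destruct o; simpl; congruence. Qed.

Lemma no_dead {AP St} (K : kripke AP St) x : ~ deadlock (dext K) x.
Proof.
  intros H; unfold deadlock in H. destruct x as [u|].
  - destruct (classic (deadlock K u)) as [D|D].
    + apply (H None); exact D.
    + apply D; intros v Hv; apply (H (Some v)); exact Hv.
  - apply (H None); exact I.
Qed.

Lemma lift_fin {AP St} (K : kripke AP St) g k :
  fin_path K g k -> fin_path (dext K) (fun i => Some (g i)) k.
Proof. intros Hp i Hi; exact (Hp i Hi). Qed.

Lemma lift_inf {AP St} (K : kripke AP St) g :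
  inf_path K g -> inf_path (dext K) (fun i => Some (g i)).
Proof. intros Hp i; exact (Hp i). Qed.

Definition DAnd2 {AP} (a b : ctl_delta AP) : ctl_delta AP :=
  DAnd (fun x : bool => if x then a else b).
Definition nd {AP} : ctl_delta AP := DNeg (DAtom None).

Lemma sat_DAnd2 {AP St} (K : kripke (option AP) St) x a b :
  sat_delta K x (DAnd2 a b) <-> sat_delta K x a /\ sat_delta K x b.
Proof.
  simpl; split.
  - intros H; split; [apply (H true)|apply (H false)].
  - intros [Ha Hb] [|]; assumption.
Qed.

Lemma nd_iff {AP St} (K : kripke AP St) x :
  sat_delta (dext K) x nd <-> x <> None.
Proof. destruct x; simpl; intuition; discriminate. Qed.

Lemma nd_of {AP St} (K : kripke AP St) x a :
  sat_delta (dext K) x (DAnd2 a nd) -> x <> None.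
Proof. intros H; apply (proj1 (nd_iff K x)); apply (proj2 (proj1 (sat_DAnd2 _ _ _ _) H)). Qed.

Lemma a_of {AP St} (K : kripke AP St) x a :
  sat_delta (dext K) x (DAnd2 a nd) -> sat_delta (dext K) x a.
Proof. intros H; apply (proj1 (proj1 (sat_DAnd2 _ _ _ _) H)). Qed.

Fixpoint t1 {AP} (phi : ctl_inf AP) : ctl_delta AP :=
  match phi with
  | IAtom p => DAtom (Some p)
  | INeg a => DNeg (t1 a)
  | IAnd Phi => DAnd (fun i => t1 (Phi i))
  | IEU a b => DEU (DAnd2 (t1 a) nd) (DAnd2 (t1 b) nd)
  | IEinfG a => DEG (DAnd2 (t1 a) nd)
  end.

Lemma main1 {AP St} (K : kripke AP St) phi : forall s,
  sat_inf K s phi <-> sat_delta (dext K) (Some s) (t1 phi).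
Proof.
  induction phi as [p|a IH|I Phi IH|a IHa b IHb|a IH]; intros s; simpl.
  - tauto.
  - rewrite IH; tauto.
  - split; intros Hi i; [apply IH|apply (proj2 (IH i s))]; apply Hi.
  - split.
    + intros (f & k & H0 & Hp & Hb & Ha).
      exists (fun i => Some (f i)), k. split; [congruence|].
      split; [apply lift_fin; exact Hp|]. split.
      * apply sat_DAnd2; split; [apply IHb; auto | apply nd_iff; discriminate].
      * intros i Hi; apply sat_DAnd2; split; [apply IHa; auto | apply nd_iff; discriminate].
    + intros (f & k & H0 & Hp & Hb & Ha).
      assert (Hs : forall i, i <= k -> f i = Some (getd s (f i))).
      { intros i Hi; apply getd_eq.
        destruct (Nat.eq_dec i k) as [->|Hne].
        - apply (nd_of K _ _ Hb).
        - apply (nd_of K _ _ (Ha i ltac:(lia))). }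
      exists (fun i => getd s (f i)), k. split; [rewrite H0; reflexivity|].
      split; [|split].
      * intros i Hi. pose proof (Hp i Hi) as H.
        rewrite (Hs i ltac:(lia)), (Hs (Datatypes.S i) ltac:(lia)) in H; exact H.
      * apply IHb. rewrite <- Hs by lia. apply (a_of K _ _ Hb).
      * intros i Hi. apply IHa. rewrite <- Hs by lia. apply (a_of K _ _ (Ha i Hi)).
  - split.
    + intros (f & H0 & Hp & Ha). left. exists (fun i => Some (f i)).
      split; [congruence|]. split; [apply lift_inf; exact Hp|].
      intros i; apply sat_DAnd2; split; [apply IH; auto | apply nd_iff; discriminate].
    + intros [(f & H0 & Hp & Ha) | (f & k & _ & _ & Hd & _)].
      * assert (Hs : forall i, f i = Some (getd s (f i))).
        { intros i; apply getd_eq. apply (nd_of K _ _ (Ha i)). }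
        exists (fun i => getd s (f i)). split; [rewrite H0; reflexivity|]. split.
        -- intros i. pose proof (Hp i) as H. rewrite (Hs i), (Hs (Datatypes.S i)) in H; exact H.
        -- intros i. apply IH. rewrite <- Hs. apply (a_of K _ _ (Ha i)).
      * exfalso; exact (no_dead K _ Hd).
Qed.

Definition Itrue {AP} : ctl_inf AP := IAnd (fun x : False => match x with end).
Definition Ifalse {AP} : ctl_inf AP := INeg Itrue.
Definition IAnd2 {AP} (a b : ctl_inf AP) : ctl_inf AP :=
  IAnd (fun x : bool => if x then a else b).
Definition IOr {AP} (a b : ctl_inf AP) : ctl_inf AP := INeg (IAnd2 (INeg a) (INeg b)).
Definition Ipand {AP} (P : Prop) (a : ctl_inf AP) : ctl_inf AP :=
  INeg (IAnd (fun _ : P => INeg a)).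
Definition Dl {AP} (c : ctl_inf AP) : ctl_inf AP :=
  IEU c (IAnd2 c (IAnd2 (INeg (IEU Itrue (INeg c))) (INeg (IEinfG Itrue)))).

Lemma sat_Itrue {AP St} (K : kripke AP St) x : sat_inf K x Itrue.
Proof. intros []. Qed.

Lemma sat_IAnd2 {AP St} (K : kripke AP St) x a b :
  sat_inf K x (IAnd2 a b) <-> sat_inf K x a /\ sat_inf K x b.
Proof.
  simpl; split.
  - intros H; split; [apply (H true)|apply (H false)].
  - intros [Ha Hb] [|]; assumption.
Qed.

Lemma sat_IOr {AP St} (K : kripke AP St) x a b :
  sat_inf K x (IOr a b) <-> sat_inf K x a \/ sat_inf K x b.
Proof.
  unfold IOr. change (~ sat_inf K x (IAnd2 (INeg a) (INeg b)) <-> sat_inf K x a \/ sat_inf K x b).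
  rewrite sat_IAnd2. simpl. tauto.
Qed.

Lemma sat_Ipand {AP St} (K : kripke AP St) x P a :
  sat_inf K x (Ipand P a) <-> P /\ sat_inf K x a.
Proof.
  simpl. split.
  - intros H. apply NNPP; intros H'; apply H; intros p Ha; apply H'; tauto.
  - intros [p Ha] H; apply (H p Ha).
Qed.

Definition catp {St} (f : nat -> St) k (g : nat -> St) i :=
  if i <=? k then f i else g (i - k).

Lemma catp_l {St} (f g : nat -> St) k i : i <= k -> catp f k g i = f i.
Proof. intros H; unfold catp; destruct (Nat.leb_spec i k); [reflexivity|lia]. Qed.

Lemma catp_r {St} (f g : nat -> St) k i : f k = g 0 -> k <= i -> catp f k g i = g (i - k).
Proof.
  intros E H; unfold catp; destruct (Nat.leb_spec i k); [|reflexivity].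
  replace i with k by lia. rewrite Nat.sub_diag; exact E.
Qed.

Lemma catp_fin {AP St} (K : kripke AP St) f k g m :
  fin_path K f k -> fin_path K g m -> f k = g 0 -> fin_path K (catp f k g) (k + m).
Proof.
  intros Hf Hg E i Hi.
  destruct (Nat.lt_ge_cases i k).
  - rewrite !catp_l by lia. apply Hf; lia.
  - rewrite !catp_r by (auto; lia).
    replace (Datatypes.S i - k) with (Datatypes.S (i - k)) by lia. apply Hg; lia.
Qed.

Lemma Dl_spec {AP St} (K : kripke AP St) s c :
  sat_inf K s (Dl c) <-> exists f k, f 0 = s /\ fin_path K f k /\ deadlock K (f k) /\
     (forall i, i <= k -> sat_inf K (f i) c).
Proof.
  split.
  - intros (f & k & H0 & Hp & Hend & Ha).
    apply sat_IAnd2 in Hend. destruct Hend as [Hc Hend].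
    apply sat_IAnd2 in Hend. destruct Hend as [Hreach Hinf].
    set (v := f k) in *.
    assert (HA : exists g m, g 0 = v /\ fin_path K g m /\ deadlock K (g m)).
    { apply NNPP; intros Hno.
      set (R := fun x => exists g m, g 0 = v /\ fin_path K g m /\ g m = x).
      assert (Hex : forall x, R x -> exists y, ktr K x y /\ R y).
      { intros x (g & m & G0 & Gp & Gm).
        assert (Hnd : ~ deadlock K x).
        { intros D; apply Hno; exists g, m; subst x; auto. }
        apply not_all_not_ex. intros Hn. apply Hnd. intros y Hy. apply (Hn y). split; [exact Hy|].
        exists (fun i => if i <=? m then g i else y), (Datatypes.S m). split.
        - simpl. exact G0.
        - split.
          + intros i Hi. destruct (Nat.leb_spec i m); destruct (Nat.leb_spec (Datatypes.S i) m).
            * apply Gp; lia.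
            * replace i with m by lia. rewrite Gm; exact Hy.
            * lia.
            * lia.
          + destruct (Nat.leb_spec (Datatypes.S m) m); [lia|reflexivity]. }
      assert (Hstep : forall x : {x | R x}, {y : {x | R x} | ktr K (proj1_sig x) (proj1_sig y)}).
      { intros [x Hx]. destruct (constructive_indefinite_description _ (Hex x Hx)) as [y [Hy1 Hy2]].
        exists (exist _ y Hy2); exact Hy1. }
      assert (Rv : R v). { exists (fun _ => v), 0. split; [reflexivity|]. split; [intros i Hi; lia|reflexivity]. }
      set (sq := fun n => nat_rect (fun _ => {x | R x}) (exist _ v Rv)
                             (fun _ x => proj1_sig (Hstep x)) n).
      apply Hinf. exists (fun n => proj1_sig (sq n)). split; [reflexivity|]. split.
      - intros i. exact (proj2_sig (Hstep (sq i))).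
      - intros i; apply sat_Itrue. }
    destruct HA as (g & m & G0 & Gp & Gd).
    assert (Gc : forall i, i <= m -> sat_inf K (g i) c).
    { intros i Hi. apply NNPP; intros Hn. apply Hreach. exists g, i.
      split; [exact G0|]. split; [intros j Hj; apply Gp; lia|]. split; [exact Hn|].
      intros; apply sat_Itrue. }
    exists (catp f k g), (k + m). split; [rewrite catp_l by lia; exact H0|].
    split; [apply catp_fin; auto|]. split.
    + rewrite catp_r by (auto; lia). replace (k + m - k) with m by lia. exact Gd.
    + intros i Hi. destruct (Nat.lt_ge_cases i k).
      * rewrite catp_l by lia. apply Ha; lia.
      * rewrite catp_r by (auto; lia). apply Gc; lia.
  - intros (f & k & H0 & Hp & Hd & Ha). exists f, k. split; [exact H0|]. split; [exact Hp|].
    split; [|intros i Hi; apply Ha; lia].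
    apply sat_IAnd2; split; [apply Ha; lia|]. apply sat_IAnd2; split.
    + intros (f' & k' & F0 & Fp & Fn & _). destruct k' as [|k'].
      * apply Fn. rewrite F0. apply Ha; lia.
      * apply (Hd (f' 1)). rewrite <- F0. apply Fp; lia.
    + intros (f' & F0 & Fp & _). apply (Hd (f' 1)). rewrite <- F0. apply Fp.
Qed.

Fixpoint dv {AP} (phi : ctl_delta AP) : Prop :=
  match phi with
  | DAtom o => match o with None => True | Some _ => False end
  | DNeg a => ~ dv a
  | DAnd Phi => forall i, dv (Phi i)
  | DEU _ b => dv b
  | DEG a => dv a
  end.

Lemma persist {AP St} (K : kripke AP St) f k j :
  fin_path (dext K) f k -> f j = None -> forall n, j + n <= k -> f (j + n) = None.
Proof.
  intros Hp Hj n; induction n as [|n IHn]; intros H.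
  - rewrite Nat.add_0_r; exact Hj.
  - pose proof (Hp (j + n) ltac:(lia)) as T. rewrite IHn in T by lia.
    replace (j + Datatypes.S n) with (Datatypes.S (j + n)) by lia.
    destruct (f (Datatypes.S (j + n))); [contradiction|reflexivity].
Qed.

Lemma sat_None {AP St} (K : kripke AP St) phi :
  sat_delta (dext K) None phi <-> dv phi.
Proof.
  induction phi as [o|a IH|I Phi IH|a IHa b IHb|a IH]; simpl.
  - destruct o; simpl; tauto.
  - rewrite IH; tauto.
  - split; intros H i; [apply IH|apply (proj2 (IH i))]; apply H.
  - split.
    + intros (f & k & H0 & Hp & Hb & _). pose proof (persist K f k 0 Hp H0 k ltac:(lia)) as T.
      simpl in T. rewrite T in Hb.
      apply IHb; exact Hb.
    + intros H. exists (fun _ => None), 0. split; [reflexivity|]. split; [intros i Hi; lia|].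
      split; [apply IHb; exact H| intros i Hi; lia].
  - split.
    + intros [(f & H0 & _ & Ha) | (f & k & H0 & _ & _ & Ha)].
      * apply IH. rewrite <- H0. apply Ha.
      * apply IH. rewrite <- H0. apply Ha; lia.
    + intros H. left. exists (fun _ => None). split; [reflexivity|]. split.
      * intros i; exact I.
      * intros i; apply IH; exact H.
Qed.

Lemma split_path {AP St} (K : kripke AP St) (f : nat -> option St) s k :
  f 0 = Some s -> fin_path (dext K) f k ->
  (forall i, i <= k -> f i <> None) \/
  (exists j, 0 < j <= k /\ (forall i, i < j -> f i <> None) /\ f j = None).
Proof.
  intros H0; induction k as [|k IHk]; intros Hp.
  - left. intros i Hi. replace i with 0 by lia. congruence.
  - destruct IHk as [A|B].
    + intros i Hi; apply Hp; lia.
    + destruct (f (Datatypes.S k)) eqn:E.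
      * left. intros i Hi. destruct (Nat.eq_dec i (Datatypes.S k)) as [->|Hne]; [congruence|apply A; lia].
      * right. exists (Datatypes.S k). split; [lia|]. split; [intros i Hi; apply A; lia|exact E].
    + right. destruct B as (j & Hj & B1 & B2). exists j. split; [lia|auto].
Qed.

Fixpoint t2 {AP} (phi : ctl_delta AP) : ctl_inf AP :=
  match phi with
  | DAtom o => match o with Some p => IAtom p | None => Ifalse end
  | DNeg a => INeg (t2 a)
  | DAnd Phi => IAnd (fun i => t2 (Phi i))
  | DEU a b => IOr (IEU (t2 a) (t2 b)) (Ipand (dv b) (Dl (t2 a)))
  | DEG a => IOr (IEinfG (t2 a)) (Ipand (dv a) (Dl (t2 a)))
  end.

Definition extd {St} (g : nat -> St) k (i : nat) : option St :=
  if i <=? k then Some (g i) else None.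

Lemma extd_l {St} (g : nat -> St) k i : i <= k -> extd g k i = Some (g i).
Proof. intros H; unfold extd; destruct (Nat.leb_spec i k); [reflexivity|lia]. Qed.
Lemma extd_r {St} (g : nat -> St) k i : k < i -> extd g k i = None.
Proof. intros H; unfold extd; destruct (Nat.leb_spec i k); [lia|reflexivity]. Qed.

Lemma extd_step {AP St} (K : kripke AP St) g k i :
  fin_path K g k -> deadlock K (g k) -> dext_tr K (extd g k i) (extd g k (Datatypes.S i)).
Proof.
  intros Hp Hd. destruct (Nat.lt_ge_cases i k).
  - rewrite !extd_l by lia. apply Hp; lia.
  - destruct (Nat.eq_dec i k) as [->|Hne].
    + rewrite extd_l, extd_r by lia. exact Hd.
    + rewrite !extd_r by lia. exact I.
Qed.

Lemma main2 {AP St} (K : kripke AP St) phi : forall s,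
  sat_delta (dext K) (Some s) phi <-> sat_inf K s (t2 phi).
Proof.
  induction phi as [o|a IH|I Phi IH|a IHa b IHb|a IH]; intros s.
  - destruct o; simpl; [tauto|]. split; [intros []|intros H; apply H; intros []].
  - simpl; rewrite IH; tauto.
  - simpl; split; intros Hi i; [apply IH|apply (proj2 (IH i s))]; apply Hi.
  - simpl t2. rewrite sat_IOr, sat_Ipand, Dl_spec. simpl sat_delta. split.
    + intros (f & k & H0 & Hp & Hb & Ha).
      destruct (split_path K f s k H0 Hp) as [A | (j & Hj & B1 & B2)].
      * left. simpl. exists (fun i => getd s (f i)), k.
        assert (Hs : forall i, i <= k -> f i = Some (getd s (f i))) by (intros; apply getd_eq; auto).
        split; [rewrite H0; reflexivity|]. split; [|split].
        -- intros i Hi. pose proof (Hp i Hi) as H.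
           rewrite (Hs i ltac:(lia)), (Hs (Datatypes.S i) ltac:(lia)) in H; exact H.
        -- apply IHb. rewrite <- Hs by lia. exact Hb.
        -- intros i Hi. apply IHa. rewrite <- Hs by lia. apply Ha; exact Hi.
      * right. split.
        -- pose proof (persist K f k j Hp B2 (k - j) ltac:(lia)) as T.
           replace (j + (k - j)) with k in T by lia. rewrite T in Hb.
           apply sat_None in Hb; exact Hb.
        -- assert (Hs : forall i, i < j -> f i = Some (getd s (f i))) by (intros; apply getd_eq; auto).
           exists (fun i => getd s (f i)), (j - 1).
           split; [rewrite H0; reflexivity|]. split; [|split].
           ++ intros i Hi. pose proof (Hp i ltac:(lia)) as H.
              rewrite (Hs i ltac:(lia)), (Hs (Datatypes.S i) ltac:(lia)) in H; exact H.
           ++ pose proof (Hp (j - 1) ltac:(lia)) as H.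
              replace (Datatypes.S (j - 1)) with j in H by lia.
              rewrite B2, (Hs (j - 1) ltac:(lia)) in H. exact H.
           ++ intros i Hi. apply IHa. rewrite <- Hs by lia. apply Ha; lia.
    + intros [(g & k & H0 & Hp & Hb & Ha) | (Hdv & (g & k & H0 & Hp & Hd & Ha))].
      * exists (fun i => Some (g i)), k. split; [congruence|]. split; [apply lift_fin; exact Hp|].
        split; [apply IHb; exact Hb|]. intros i Hi; apply IHa; apply Ha; exact Hi.
      * exists (extd g k), (Datatypes.S k). split; [rewrite extd_l by lia; congruence|].
        split; [intros i Hi; apply extd_step; auto|]. split.
        -- rewrite extd_r by lia. apply sat_None; exact Hdv.
        -- intros i Hi. rewrite extd_l by lia. apply IHa, Ha; lia.
  - simpl t2. rewrite sat_IOr, sat_Ipand, Dl_spec. simpl sat_delta. split.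
    + intros [(f & H0 & Hp & Ha) | (f & k & _ & _ & Hd & _)]; [|exfalso; exact (no_dead K _ Hd)].
      destruct (classic (exists j, f j = None)) as [[j Hj]|Hall].
      * assert (Hpj : fin_path (dext K) f j) by (intros i _; apply Hp).
        destruct (split_path K f s j H0 Hpj) as [A | (j' & Hj' & B1 & B2)].
        { exfalso; exact (A j (le_n j) Hj). }
        right. split.
        -- pose proof (Ha j') as H. rewrite B2 in H. apply sat_None in H; exact H.
        -- assert (Hs : forall i, i < j' -> f i = Some (getd s (f i))) by (intros; apply getd_eq; auto).
           exists (fun i => getd s (f i)), (j' - 1).
           split; [rewrite H0; reflexivity|]. split; [|split].
           ++ intros i Hi. pose proof (Hp i) as H.
              rewrite (Hs i ltac:(lia)), (Hs (Datatypes.S i) ltac:(lia)) in H; exact H.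
           ++ pose proof (Hp (j' - 1)) as H.
              replace (Datatypes.S (j' - 1)) with j' in H by lia.
              rewrite B2, (Hs (j' - 1) ltac:(lia)) in H. exact H.
           ++ intros i Hi. apply IH. rewrite <- Hs by lia. apply Ha.
      * left. assert (Hs : forall i, f i = Some (getd s (f i)))
          by (intros i; apply getd_eq; intros E; apply Hall; exists i; exact E).
        exists (fun i => getd s (f i)). split; [rewrite H0; reflexivity|]. split.
        -- intros i. pose proof (Hp i) as H. rewrite (Hs i), (Hs (Datatypes.S i)) in H; exact H.
        -- intros i. apply IH. rewrite <- Hs. apply Ha.
    + intros [(g & H0 & Hp & Ha) | (Hdv & (g & k & H0 & Hp & Hd & Ha))].
      * left. exists (fun i => Some (g i)). split; [congruence|]. split; [apply lift_inf; exact Hp|].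
        intros i; apply IH; apply Ha.
      * left. exists (extd g k). split; [rewrite extd_l by lia; congruence|].
        split; [intros i; apply extd_step; auto|].
        intros i. destruct (Nat.le_gt_cases i k).
        -- rewrite extd_l by lia. apply IH, Ha; lia.
        -- rewrite extd_r by lia. apply sat_None; exact Hdv.
Qed.

Theorem theorem8p6 (AP : Type) :
  (forall phi : ctl_inf AP, exists phi' : ctl_delta AP,
     forall (S : Type) (K : kripke AP S) (s : S),
       sat_inf K s phi <-> sat_delta (dext K) (Some s) phi')
  /\
  (forall phi : ctl_delta AP, exists phi' : ctl_inf AP,
     forall (S : Type) (K : kripke AP S) (s : S),
       sat_delta (dext K) (Some s) phi <-> sat_inf K s phi').
Proof.
  split.
  - intros phi. exists (t1 phi). intros St K s. apply main1.
  - intros phi. exists (t2 phi). intros St K s. apply main2.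
Qed.
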